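(* Let $p/q$ be a rational number with $q\in\mathbb N$, $\gcd(p,q)=1$, and let $n\in\mathbb N$ with $\gcd(n^2,q)\mid n$. Then for every $y>0$, $$\mathcal R_n\left(\tfrac pq,y\right)=\bigcup_{d\mid n}\mathcal R^{\rm pr}_{n/d}\left(x_d,\tfrac{d^2}{k^2n^2y}\right),$$ for some numbers $x_d\in\mathbb R/\mathbb Z$ depending on $d$ (and on $p,q,n$), where $k=q/\gcd(n,q)$. If moreover $\gcd(n,q)=1$, then for any integers $a,b$ with $an+bq=1$, $$\mathcal R^{\rm pr}_n\left(\tfrac pq,y\right)=\mathcal R^{\rm pr}_n\left(-\tfrac{\overline{pn}\,a}{q},\tfrac{1}{q^2n^2y}\right),$$ where $\overline{pn}$ is an integer representing the multiplicative inverse of $pn$ modulo $q$.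
   Context: $\Gamma=\mathrm{SL}_2(\mathbb Z)$, $\mathcal M=\Gamma\backslash\mathbb H$. For $n\in\mathbb N$, $x\in\mathbb R/\mathbb Z$, $y>0$: $\mathcal R_n(x,y)=\{\Gamma(x+\tfrac jn+iy):0\le j\le n-1\}$ and $\mathcal R^{\rm pr}_n(x,y)=\{\Gamma(x+\tfrac jn+iy):j\in(\mathbb Z/n\mathbb Z)^\times\}$ (for $n=1$, $(\mathbb Z/1\mathbb Z)^\times=\{0\}$). *)

(* Defs.v *)
From Stdlib Require Import Reals ZArith Arith.
Open Scope R_scope.

(* A point z = x + i y of the upper half plane is represented by the pair (x, y). *)
Definition hpoint := (R * R)%type.

(* Mobius action of the integer matrix [[a, b], [c, d]] on z = x + i y:
   (a z + b)/(c z + d) = ((a x + b)(c x + d) + a c y^2 + i y (a d - b c)) / |c z + d|^2. *)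
Definition mob (a b c d : Z) (z : hpoint) : hpoint :=
  let (x, y) := z in
  let A := IZR a in let B := IZR b in let C := IZR c in let D := IZR d in
  let den := (C * x + D) ^ 2 + (C * y) ^ 2 in
  (((A * x + B) * (C * x + D) + A * C * y ^ 2) / den,
   ((A * D - B * C) * y) / den).

(* The orbit Gamma z under Gamma = SL_2(Z): a point of M = Gamma \ H, as a set of points. *)
Definition orbit (z : hpoint) : hpoint -> Prop :=
  fun w => exists a b c d : Z, (a * d - b * c = 1)%Z /\ w = mob a b c d z.

(* A set of points of M, as a predicate on orbits. *)
Definition Mset := (hpoint -> Prop) -> Prop.

Definition Rn (n : nat) (x y : R) : Mset :=
  fun O => exists j : nat, (j < n)%nat /\ O = orbit (x + INR j / INR n, y).

(* R^pr_n(x, y) = { Gamma(x + j/n + i y) : j in (Z/nZ)^x }, j taken in 0..n-1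
   (for n = 1 this is j = 0, since gcd 0 1 = 1). *)
Definition Rpr (n : nat) (x y : R) : Mset :=
  fun O => exists j : nat, (j < n)%nat /\ Nat.gcd j n = 1%nat /\
                           O = orbit (x + INR j / INR n, y).

Definition Mset_eq (S T : Mset) : Prop := forall O, S O <-> T O.

(* Main.v *)
Require Import Defs.
From Stdlib Require Import Reals ZArith Arith Lia Lra Psatz Znumtheory.
From Stdlib Require Import FunctionalExtensionality PropExtensionality.
Open Scope R_scope.

Lemma den_pos (c d : Z) (x y : R) : 0 < y -> (c * d <> 0 \/ c <> 0 \/ d <> 0)%Z ->
  0 < (IZR c * x + IZR d) ^ 2 + (IZR c * y) ^ 2.
Proof.
  intros Hy H. destruct (Z.eq_dec c 0) as [->|Hc].
  - assert (d <> 0)%Z by lia. apply not_0_IZR in H0.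
    simpl. replace (0 * x + IZR d) with (IZR d) by ring. nra.
  - apply not_0_IZR in Hc. assert (0 < (IZR c * y)^2).
    { simpl. rewrite Rmult_1_r. assert (IZR c * y <> 0). { apply Rmult_integral_contrapositive_currified; [exact Hc|lra]. } nra. }
    assert (0 <= (IZR c * x + IZR d) ^ 2) by apply pow2_ge_0. lra.
Qed.

Lemma det_nz a b c d : (a * d - b * c = 1)%Z -> (c * d <> 0 \/ c <> 0 \/ d <> 0)%Z.
Proof. intros H. destruct (Z.eq_dec c 0) as [->|]; [|lia]. destruct (Z.eq_dec d 0) as [->|]; [|lia]. lia. Qed.

Lemma sq_pos (t : R) : t <> 0 -> 0 < t ^ 2.
Proof. intros H. simpl. rewrite Rmult_1_r. apply Rsqr_pos_lt. exact H. Qed.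

Lemma den_pos2 (c d : Z) (U W V : R) : V <> 0 -> W <> 0 -> (c * d <> 0 \/ c <> 0 \/ d <> 0)%Z ->
  0 < (IZR c * U + IZR d * W) ^ 2 + (IZR c * V) ^ 2.
Proof.
  intros HV HW H. destruct (Z.eq_dec c 0) as [->|Hc].
  - assert (d <> 0)%Z by lia. apply not_0_IZR in H0.
    replace (0 * U + IZR d * W) with (IZR d * W) by ring.
    assert (IZR d * W <> 0) by (apply Rmult_integral_contrapositive_currified; assumption).
    assert (0 < (IZR d * W)^2) by (apply sq_pos; assumption).
    assert (0 <= (0 * V)^2) by apply pow2_ge_0. lra.
  - apply not_0_IZR in Hc. assert (IZR c * V <> 0) by (apply Rmult_integral_contrapositive_currified; assumption).
    assert (0 < (IZR c * V)^2) by (apply sq_pos; assumption).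
    assert (0 <= (IZR c * U + IZR d * W) ^ 2) by apply pow2_ge_0. lra.
Qed.

Lemma mob_comp a b c d a' b' c' d' x y : 0 < y ->
  (a * d - b * c = 1)%Z -> (a' * d' - b' * c' = 1)%Z ->
  mob a b c d (mob a' b' c' d' (x, y)) =
  mob (a * a' + b * c') (a * b' + b * d') (c * a' + d * c') (c * b' + d * d') (x, y).
Proof.
  intros Hy H1 H2.
  assert (D2 := den_pos c' d' x y Hy (det_nz _ _ _ _ H2)).
  unfold mob at 2. cbv zeta.
  set (den2 := (IZR c' * x + IZR d') ^ 2 + (IZR c' * y) ^ 2) in *.
  assert (E2 : IZR a' * IZR d' - IZR b' * IZR c' = 1).
  { rewrite <- !mult_IZR, <- minus_IZR, H2. reflexivity. }
  set (X := ((IZR a' * x + IZR b') * (IZR c' * x + IZR d') + IZR a' * IZR c' * y ^ 2) / den2).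
  assert (D1 := den_pos c d X ((IZR a' * IZR d' - IZR b' * IZR c') * y / den2) ltac:(rewrite E2; apply Rdiv_lt_0_compat; lra) (det_nz _ _ _ _ H1)).
  assert (D12 := den_pos (c * a' + d * c') (c * b' + d * d') x y Hy
    (det_nz (a * a' + b * c') (a * b' + b * d') (c * a' + d * c') (c * b' + d * d') ltac:(replace 1%Z with ((a*d-b*c)*(a'*d'-b'*c'))%Z by (rewrite H1, H2; reflexivity); ring))).
  unfold mob. cbv zeta. rewrite ?plus_IZR, ?mult_IZR in *. unfold X in *.
  unfold den2 in *; clear X den2. 
  f_equal; field; (split; [lra|split;[lra|]]); apply Rgt_not_eq, den_pos2;
  [rewrite E2; nra | lra | exact (det_nz _ _ _ _ H1) | rewrite E2; nra | lra | exact (det_nz _ _ _ _ H1)].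
Qed.

Lemma mob_id x y : mob 1 0 0 1 (x, y) = (x, y).
Proof. unfold mob. cbv zeta. f_equal; field. Qed.

Lemma mob_im_pos a b c d x y : 0 < y -> (a * d - b * c = 1)%Z ->
  0 < snd (mob a b c d (x, y)).
Proof.
  intros Hy H. unfold mob; cbv zeta; simpl snd.
  assert (E : IZR a * IZR d - IZR b * IZR c = 1).
  { rewrite <- !mult_IZR, <- minus_IZR, H. reflexivity. }
  rewrite E. apply Rdiv_lt_0_compat. lra.
  apply den_pos; [exact Hy| exact (det_nz _ _ _ _ H)].
Qed.

Lemma orbit_eq a b c d x y : 0 < y -> (a * d - b * c = 1)%Z ->
  orbit (mob a b c d (x, y)) = orbit (x, y).
Proof.
  intros Hy H. pose proof (mob_im_pos a b c d x y Hy H) as Hp.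
  destruct (mob a b c d (x, y)) as [X Y] eqn:EM. simpl in Hp.
  apply functional_extensionality; intro w; apply propositional_extensionality.
  split; intros [a1 [b1 [c1 [d1 [Hd ->]]]]].
  - rewrite <- EM, mob_comp by assumption.
    do 4 eexists; split; [|reflexivity].
    replace 1%Z with ((a1*d1-b1*c1)*(a*d-b*c))%Z by (rewrite Hd, H; reflexivity); ring.
  - assert (Ez : mob d (-b) (-c) a (X, Y) = (x, y)).
    { rewrite <- EM, mob_comp by (try assumption; lia).
      replace (d * a + - b * c)%Z with 1%Z by lia.
      replace (d * b + - b * d)%Z with 0%Z by ring.
      replace (- c * a + a * c)%Z with 0%Z by ring.
      replace (- c * b + a * d)%Z with 1%Z by lia.
      apply mob_id. }
    rewrite <- Ez, mob_comp by (try assumption; lia).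
    do 4 eexists; split; [|reflexivity].
    replace 1%Z with ((a1*d1-b1*c1)*(a*d-b*c))%Z by (rewrite Hd, H; reflexivity); ring.
Qed.

Lemma orbit_key (u V a A l : Z) (x y : R) : 0 < y -> (0 < V)%Z ->
  (V | a * u + 1)%Z -> (V | a - A)%Z ->
  x = IZR u / IZR V + IZR l ->
  orbit (x, y) = orbit (IZR A / IZR V, 1 / (IZR V ^ 2 * y)).
Proof.
  intros Hy HV [b Hb] [s Hs] Hx.
  assert (T : forall (m : Z) x0 y0, 0 < y0 -> orbit (x0 + IZR m, y0) = orbit (x0, y0)).
  { intros m x0 y0 Hy0. rewrite <- (orbit_eq 1 m 0 1 x0 y0 Hy0 ltac:(ring)).
    f_equal. unfold mob; cbv zeta. f_equal; field. }
  assert (HVr : IZR V <> 0) by (apply not_0_IZR; lia).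
  subst x. rewrite T by exact Hy.
  rewrite <- (orbit_eq a (-b) V (-u) (IZR u / IZR V) y Hy ltac:(lia)).
  replace (IZR A / IZR V) with (IZR a / IZR V + IZR (-s)).
  2:{ replace A with (a - s * V)%Z by lia. rewrite minus_IZR, mult_IZR, opp_IZR. field. exact HVr. }
  rewrite T.
  2:{ apply Rdiv_lt_0_compat; [lra|]. apply Rmult_lt_0_compat; [apply sq_pos; exact HVr| exact Hy]. }
  f_equal. unfold mob; cbv zeta. rewrite opp_IZR.
  assert (E : IZR a * IZR u + 1 = IZR b * IZR V).
  { rewrite <- !mult_IZR, <- plus_IZR, Hb. reflexivity. }
  f_equal.
  all: rewrite opp_IZR; replace (IZR V * (IZR u / IZR V) + - IZR u) with 0 by (field; exact HVr).
  - field. split; lra.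
  - replace (IZR a * - IZR u - - IZR b * IZR V) with 1 by lra. field. split; lra.
Qed.
Open Scope R_scope.

Lemma nat_div_Z a b : Nat.divide a b <-> (Z.of_nat a | Z.of_nat b)%Z.
Proof.
  split.
  - intros [x ->]. exists (Z.of_nat x). apply Nat2Z.inj_mul.
  - intros H. destruct (Nat.eq_dec a 0) as [->|Ha].
    + destruct H as [z Hz]. simpl in Hz. rewrite Z.mul_0_r in Hz. exists 0%nat. lia.
    + apply Nat.mod_divide; [exact Ha|]. apply Nat2Z.inj. rewrite Nat2Z.inj_mod.
      apply Z.mod_divide; [lia|exact H].
Qed.

Lemma gcd_nat_Z a b : Z.of_nat (Nat.gcd a b) = Z.gcd (Z.of_nat a) (Z.of_nat b).
Proof.
  apply Z.divide_antisym_nonneg; [lia|apply Z.gcd_nonneg| |].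
  - apply Z.gcd_greatest; apply nat_div_Z; [apply Nat.gcd_divide_l|apply Nat.gcd_divide_r].
  - rewrite <- (Z2Nat.id (Z.gcd _ _)) by apply Z.gcd_nonneg.
    apply nat_div_Z. apply Nat.gcd_greatest; apply nat_div_Z; rewrite Z2Nat.id by apply Z.gcd_nonneg;
    [apply Z.gcd_divide_l|apply Z.gcd_divide_r].
Qed.

Open Scope Z_scope.

Lemma gcd1_of x y : (forall g, (g | x) -> (g | y) -> (g | 1)) -> Z.gcd x y = 1.
Proof.
  intros H. apply Z.divide_1_r_nonneg; [apply Z.gcd_nonneg|].
  apply H; [apply Z.gcd_divide_l|apply Z.gcd_divide_r].
Qed.

Lemma gauss' g m p : (g | m * p) -> (forall h, (h | g) -> (h | m) -> (h | 1)) -> (g | p).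
Proof. intros H1 H2. apply (Z.gauss _ m); [exact H1|]. apply gcd1_of; exact H2. Qed.

Lemma gcd1_div g x y : Z.gcd x y = 1 -> (g | x) -> (g | y) -> (g | 1).
Proof. intros H h1 h2. rewrite <- H. apply Z.gcd_greatest; assumption. Qed.

Lemma bezout_inv x V : Z.gcd x V = 1 -> exists a, (V | a * x + 1).
Proof.
  intros H. destruct (Z.gcd_bezout _ _ _ H) as [u [v Huv]].
  exists (- u). exists v. lia.
Qed.

Lemma cop_mul a b c : Z.gcd a c = 1 -> Z.gcd b c = 1 -> Z.gcd (a * b) c = 1.
Proof.
  intros H1 H2. apply Zgcd_1_rel_prime. apply rel_prime_sym, rel_prime_mult; apply rel_prime_sym, Zgcd_1_rel_prime; assumption.
Qed.

Lemma cop_mul_r a b c : Z.gcd c a = 1 -> Z.gcd c b = 1 -> Z.gcd c (a * b) = 1.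
Proof. intros. rewrite Z.gcd_comm. apply cop_mul; rewrite Z.gcd_comm; assumption. Qed.

Lemma nat_gcd1 (t n : nat) : Z.gcd (Z.of_nat t) (Z.of_nat n) = 1 -> Nat.gcd t n = 1%nat.
Proof. intros H. apply Nat2Z.inj. rewrite gcd_nat_Z. exact H. Qed.

Lemma Z_gcd1 (t n : nat) : Nat.gcd t n = 1%nat -> Z.gcd (Z.of_nat t) (Z.of_nat n) = 1.
Proof. intros H. rewrite <- gcd_nat_Z, H. reflexivity. Qed.

Lemma dv_comb2 g x y c1 c2 : (g | x) -> (g | y) -> (g | c1 * x + c2 * y).
Proof. intros. apply Z.divide_add_r; apply Z.divide_mul_r; assumption. Qed.

Lemma dv_eq g x y : x = y -> (g | x) -> (g | y).
Proof. intros ->; auto. Qed.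

Close Scope Z_scope.

Lemma part2 (p : Z) (q n : nat) :
  (0 < q)%nat -> Z.gcd p (Z.of_nat q) = 1%Z -> (0 < n)%nat ->
  Nat.gcd n q = 1%nat ->
   forall a b : Z, (a * Z.of_nat n + b * Z.of_nat q = 1)%Z ->
   forall pnbar : Z, Z.divide (Z.of_nat q) (p * Z.of_nat n * pnbar - 1) ->
   forall y : R, 0 < y ->
     Mset_eq (Rpr n (IZR p / INR q) y)
             (Rpr n (- (IZR pnbar * IZR a) / INR q) (1 / (INR q ^ 2 * INR n ^ 2 * y))).
Proof.
  intros Hq Hp Hn Hcop al be Hab pnbar [e He] y Hy.
  assert (HQN : Z.gcd (Z.of_nat n) (Z.of_nat q) = 1%Z) by (apply Z_gcd1; exact Hcop).
  set (Q := Z.of_nat q) in *. set (Nn := Z.of_nat n) in *.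
  assert (HQ : (0 < Q)%Z) by lia. assert (HN : (0 < Nn)%Z) by lia.
  assert (HQr : IZR Q <> 0) by (apply not_0_IZR; lia).
  assert (HNr : IZR Nn <> 0) by (apply not_0_IZR; lia).
  assert (HpnQ : Z.gcd (p * Nn) Q = 1%Z) by (apply cop_mul; assumption).
  set (V := (Q * Nn)%Z).
  assert (HV : (0 < V)%Z) by (unfold V; lia).
  assert (Hh : 1 / (INR q ^ 2 * INR n ^ 2 * y) = 1 / (IZR V ^ 2 * y)).
  { unfold V. rewrite mult_IZR, !INR_IZR_INZ. fold Q Nn. f_equal. ring. }
  rewrite Hh.
  intro O; split.
  - intros [j [Hj [Hg ->]]].
    pose proof (Z_gcd1 _ _ Hg) as HJ. set (J := Z.of_nat j) in *.
    set (N := (p * Nn + J * Q)%Z).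
    assert (HNV : Z.gcd N V = 1%Z).
    { apply cop_mul_r.
      - apply gcd1_of. intros g g1 g2. apply (gcd1_div g (p * Nn) Q HpnQ); [|exact g2].
        apply (dv_eq g (1 * N + (- J) * Q)); [unfold N; ring|]. apply dv_comb2; assumption.
      - apply gcd1_of. intros g g1 g2. apply (gcd1_div g (J * Q) Nn); [apply cop_mul; [exact HJ| rewrite Z.gcd_comm; exact HQN]| |exact g2].
        apply (dv_eq g (1 * N + (- p) * Nn)); [unfold N; ring|]. apply dv_comb2; assumption. }
    destruct (bezout_inv _ _ HNV) as [a [b0 Hb0]].
    set (s := (- a * e + pnbar * b0 * Nn - pnbar * a * J - pnbar * be)%Z).
    assert (Hs : (a + pnbar * al * Nn = Q * s)%Z).
    { unfold s. unfold V, N in Hb0.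
      assert (K1 := f_equal (Z.mul a) He). assert (K2 := f_equal (Z.mul pnbar) Hb0).
      assert (K3 := f_equal (Z.mul pnbar) Hab). lia. }
    pose proof (Z.mod_pos_bound s Nn HN) as Hsb.
    pose proof (Z.div_mod s Nn ltac:(lia)) as Hsd.
    set (T := (s mod Nn)%Z) in *.
    exists (Z.to_nat T). split; [lia|]. split.
    + apply nat_gcd1. rewrite Z2Nat.id by lia. apply gcd1_of. intros g g1 g2.
      assert (gs : (g | s)%Z).
      { apply (dv_eq g (1 * T + (s / Nn) * Nn)); [lia|]. apply dv_comb2; assumption. }
      assert (ga : (g | a)%Z).
      { apply (dv_eq g (Q * s + (- pnbar * al) * Nn)); [lia|]. apply dv_comb2; [exact gs|exact g2]. }
      apply (dv_eq g (1 * (a * N + 1) + (- N) * a)); [ring|]. apply dv_comb2; [|exact ga].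
      rewrite Hb0. unfold V. apply Z.divide_mul_r, Z.divide_mul_r. exact g2.
    + rewrite !INR_IZR_INZ, Z2Nat.id by lia. fold Q Nn J.
      rewrite (orbit_key N V a (- pnbar * al * Nn + T * Q) 0 _ y Hy HV).
      * f_equal. f_equal. unfold V. rewrite plus_IZR, !mult_IZR, opp_IZR. field. split; assumption.
      * exists b0. exact Hb0.
      * exists (s / Nn)%Z. unfold V. lia.
      * unfold N, V. rewrite plus_IZR, !mult_IZR. field. split; assumption.
  - intros [t [Ht [Hg ->]]].
    pose proof (Z_gcd1 _ _ Hg) as HT. set (T := Z.of_nat t) in *. fold Nn in HT.
    set (A := (- pnbar * al * Nn + T * Q)%Z).
    assert (HAV : Z.gcd A V = 1%Z).
    { apply cop_mul_r.
      - apply gcd1_of. intros g g1 g2.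
        assert (gp : (g | pnbar)%Z).
        { apply (dv_eq g ((-1) * A + (T + pnbar * be) * Q)); [unfold A; assert (K := f_equal (Z.mul pnbar) Hab); lia|]. apply dv_comb2; assumption. }
        apply (dv_eq g ((p * Nn) * pnbar + (- e) * Q)); [lia|]. apply dv_comb2; assumption.
      - apply gcd1_of. intros g g1 g2. apply (gcd1_div g (T * Q) Nn).
        + apply cop_mul; [exact HT| rewrite Z.gcd_comm; exact HQN].
        + apply (dv_eq g (1 * A + (pnbar * al) * Nn)); [unfold A; ring|]. apply dv_comb2; assumption.
        + exact g2. }
    destruct (bezout_inv _ _ HAV) as [u0 [v Hv]].
    set (W := (- u0 * e + p * Nn * (- v * Nn + (pnbar * be + T) * u0))%Z).
    assert (HW : (u0 = p * Nn + Q * W)%Z).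
    { unfold W. unfold V, A in Hv.
      assert (K1 := f_equal (Z.mul u0) He). assert (K2 := f_equal (Z.mul (p * Nn)) Hv).
      assert (K3 := f_equal (Z.mul (p * Nn * pnbar * u0)) Hab). lia. }
    pose proof (Z.mod_pos_bound W Nn HN) as HWb.
    pose proof (Z.div_mod W Nn ltac:(lia)) as HWd.
    set (J := (W mod Nn)%Z) in *.
    exists (Z.to_nat J). split; [lia|]. split.
    + apply nat_gcd1. rewrite Z2Nat.id by lia. apply gcd1_of. intros g g1 g2.
      assert (gW : (g | W)%Z).
      { apply (dv_eq g (1 * J + (W / Nn) * Nn)); [lia|]. apply dv_comb2; assumption. }
      assert (gu : (g | u0)%Z).
      { apply (dv_eq g (Q * W + p * Nn)); [lia|]. apply dv_comb2; assumption. }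
      apply (dv_eq g (1 * (u0 * A + 1) + (- A) * u0)); [ring|]. apply dv_comb2; [|exact gu].
      rewrite Hv. unfold V. apply Z.divide_mul_r, Z.divide_mul_r. exact g2.
    + rewrite !INR_IZR_INZ, Z2Nat.id by lia. fold Q Nn T.
      rewrite (orbit_key u0 V A A (- (W / Nn)) _ y Hy HV).
      * f_equal. f_equal. unfold V, A. rewrite plus_IZR, !mult_IZR, opp_IZR. field. split; assumption.
      * exists v. rewrite <- Hv. ring.
      * exists 0%Z. ring.
      * unfold V. set (Dq := (W / Nn)%Z) in *. rewrite HW, HWd. rewrite opp_IZR, !plus_IZR, !mult_IZR, !plus_IZR, !mult_IZR. field. split; assumption.
Qed.
Open Scope R_scope.

Lemma rhs_eq (R0 D Nn K M' T : Z) (y : R) : 0 < y -> (0 < D)%Z -> (0 < K)%Z -> (0 < M')%Z -> Nn = (M' * D)%Z ->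
  (IZR (R0 * D * Nn + K * T) / IZR (K * M'), 1 / (IZR (K * M') ^ 2 * y)) =
  (IZR (R0 * D * Nn) * IZR D / (IZR K * IZR Nn) + IZR T / IZR M',
   IZR D ^ 2 / (IZR K ^ 2 * IZR Nn ^ 2 * y)).
Proof.
  intros Hy HD HK HM ->.
  assert (IZR D <> 0) by (apply not_0_IZR; lia).
  assert (IZR K <> 0) by (apply not_0_IZR; lia).
  assert (IZR M' <> 0) by (apply not_0_IZR; lia).
  rewrite !plus_IZR, !mult_IZR. f_equal; field; repeat split; try assumption; lra.
Qed.

Lemma xj_eq (p J Q Nn K C M : Z) : Q = (K * C)%Z -> Nn = (M * C)%Z -> IZR K <> 0 -> IZR C <> 0 -> IZR M <> 0 ->
  IZR p / IZR Q + IZR J / IZR Nn = IZR (p * M + J * K) / (IZR K * IZR Nn).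
Proof. intros -> -> HK HC HM. rewrite !plus_IZR, !mult_IZR. field. repeat split; assumption. Qed.

Lemma part1 (p : Z) (q n : nat) :
  (0 < q)%nat -> Z.gcd p (Z.of_nat q) = 1%Z ->
  (0 < n)%nat -> Nat.divide (Nat.gcd (n ^ 2) q) n ->
  (let k := (q / Nat.gcd n q)%nat in
   exists xd : nat -> R,
     forall y : R, 0 < y ->
       Mset_eq (Rn n (IZR p / INR q) y)
         (fun O => exists d : nat, (0 < d)%nat /\ Nat.divide d n /\
            Rpr (n / d) (xd d) (INR d ^ 2 / (INR k ^ 2 * INR n ^ 2 * y)) O)).
Proof.
  intros Hq Hp Hn Hdiv k.
  assert (HkZ : Z.of_nat k = (Z.of_nat q / Z.gcd (Z.of_nat n) (Z.of_nat q))%Z).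
  { unfold k. rewrite Nat2Z.inj_div, gcd_nat_Z. reflexivity. }
  apply nat_div_Z in Hdiv. rewrite gcd_nat_Z, Nat2Z.inj_pow in Hdiv.
  set (Q := Z.of_nat q) in *. set (Nn := Z.of_nat n) in *.
  assert (HQ : (0 < Q)%Z) by lia. assert (HN : (0 < Nn)%Z) by lia.
  set (C := Z.gcd Nn Q) in *.
  assert (HC : (0 < C)%Z).
  { assert (0 <= C)%Z by apply Z.gcd_nonneg.
    destruct (Z.eq_dec C 0) as [E|]; [|lia]. apply Z.gcd_eq_0_l in E. lia. }
  destruct (Z.gcd_divide_r Nn Q) as [K HK]. fold C in HK.
  destruct (Z.gcd_divide_l Nn Q) as [M HM]. fold C in HM.
  assert (HkK : Z.of_nat k = K) by (rewrite HkZ, HK; apply Z.div_mul; lia).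
  assert (HKp : (0 < K)%Z) by nia. assert (HMp : (0 < M)%Z) by nia.
  assert (HMK : Z.gcd M K = 1%Z).
  { pose proof (Z.gcd_div_gcd Nn Q C ltac:(lia) eq_refl) as E.
    rewrite HM, HK, !Z.div_mul in E by lia. exact E. }
  assert (HCK : Z.gcd C K = 1%Z).
  { apply gcd1_of. intros g g1 g2.
    assert (gM : (g | M)%Z).
    { apply (Z.mul_divide_cancel_l _ _ C); [lia|].
      rewrite (Z.mul_comm C M), <- HM.
      eapply Z.divide_trans; [|exact Hdiv]. apply Z.gcd_greatest.
      - rewrite HM. apply (dv_eq _ (C * (C * M * M))%Z); [change (Z.of_nat 2) with 2%Z; ring|].
        apply Z.mul_divide_mono_l. apply Z.divide_mul_l, Z.divide_mul_l. exact g1.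
      - rewrite HK, (Z.mul_comm K C). apply Z.mul_divide_mono_l. exact g2. }
    apply (gcd1_div g M K HMK gM g2). }
  assert (HKN : Z.gcd K Nn = 1%Z).
  { rewrite HM, Z.mul_comm. apply cop_mul_r; rewrite Z.gcd_comm; assumption. }
  assert (HpK : Z.gcd p K = 1%Z).
  { apply gcd1_of. intros g g1 g2. apply (gcd1_div g p Q Hp g1). rewrite HK. apply Z.divide_mul_l. exact g2. }
  assert (HpMN : Z.gcd (p * M * Nn) K = 1%Z).
  { apply cop_mul; [apply cop_mul|]; [exact HpK| exact HMK| rewrite Z.gcd_comm; exact HKN]. }
  destruct (bezout_inv _ _ HpMN) as [R0 [e He]].
  exists (fun d => IZR (R0 * Z.of_nat d * Nn) * INR d / (INR k * INR n)).
  intros y Hy O. 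
  assert (HQr : IZR Q <> 0) by (apply not_0_IZR; lia).
  assert (HNr : IZR Nn <> 0) by (apply not_0_IZR; lia).
  assert (HCr : IZR C <> 0) by (apply not_0_IZR; lia).
  assert (HKr : IZR K <> 0) by (apply not_0_IZR; lia).
  assert (HMr : IZR M <> 0) by (apply not_0_IZR; lia).
  assert (HQdef : Z.of_nat q = Q) by reflexivity.
  assert (HNdef : Z.of_nat n = Nn) by reflexivity.
  clearbody C Q Nn.
  assert (HNK : Z.gcd Nn K = 1%Z) by (rewrite Z.gcd_comm; exact HKN).
  split.
  - intros [j [Hj ->]].
    set (J := Z.of_nat j).
    set (N := (p * M + J * K)%Z).
    set (D := Z.gcd N Nn).
    assert (HD : (0 < D)%Z).
    { assert (0 <= D)%Z by apply Z.gcd_nonneg.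
      destruct (Z.eq_dec D 0) as [E|]; [|lia]. apply Z.gcd_eq_0_r in E. lia. }
    destruct (Z.gcd_divide_l N Nn) as [N' HN']. fold D in HN'.
    destruct (Z.gcd_divide_r N Nn) as [M' HM']. fold D in HM'.
    assert (HM'p : (0 < M')%Z) by nia.
    assert (HNM' : Z.gcd N' M' = 1%Z).
    { pose proof (Z.gcd_div_gcd N Nn D ltac:(lia) eq_refl) as E.
      rewrite HN' in E at 1. rewrite HM' in E. rewrite !Z.div_mul in E by lia. exact E. }
    assert (HNK' : Z.gcd N K = 1%Z).
    { apply gcd1_of. intros g g1 g2. apply (gcd1_div g (p * M) K); [apply cop_mul; assumption| |exact g2].
      apply (dv_eq g (1 * N + (- J) * K)%Z); [unfold N; ring|]. apply dv_comb2; assumption. }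
    assert (HN'K : Z.gcd N' K = 1%Z).
    { apply gcd1_of. intros g g1 g2. apply (gcd1_div g N K HNK'); [|exact g2].
      rewrite HN'. apply Z.divide_mul_l. exact g1. }
    set (V' := (K * M')%Z).
    assert (HV' : (0 < V')%Z) by (unfold V'; lia).
    assert (HNV : Z.gcd N' V' = 1%Z) by (apply cop_mul_r; assumption).
    destruct (bezout_inv _ _ HNV) as [a [b0 Hb0]].
    set (s := (a * e - R0 * Nn * (D * b0 * M' - a * J))%Z).
    assert (Hs : (a - R0 * D * Nn = K * s)%Z).
    { unfold s. unfold V' in Hb0. unfold N in HN'.
      assert (K1 := f_equal (Z.mul a) He). assert (K2 := f_equal (Z.mul (R0 * Nn * D)) Hb0).
      assert (K3 := f_equal (Z.mul (R0 * Nn * a)) HN'). lia. }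
    pose proof (Z.mod_pos_bound s M' HM'p) as Hsb.
    pose proof (Z.div_mod s M' ltac:(lia)) as Hsd.
    set (T := (s mod M')%Z) in *.
    set (A := (R0 * D * Nn + K * T)%Z).
    assert (HnD : Z.of_nat (n / Z.to_nat D) = M').
    { rewrite Nat2Z.inj_div, Z2Nat.id by lia. rewrite HNdef, HM'. apply Z.div_mul. lia. }
    exists (Z.to_nat D). split; [lia|]. split.
    { apply nat_div_Z. rewrite Z2Nat.id by lia. rewrite HNdef. exists M'. exact HM'. }
    exists (Z.to_nat T). split.
    { apply Nat2Z.inj_lt. rewrite HnD, Z2Nat.id by lia. lia. }
    split.
    { apply nat_gcd1. rewrite HnD, Z2Nat.id by lia. apply gcd1_of. intros g g1 g2.
      assert (gs : (g | s)%Z).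
      { apply (dv_eq g (1 * T + (s / M') * M')%Z); [lia|]. apply dv_comb2; assumption. }
      assert (ga : (g | a)%Z).
      { apply (dv_eq g (K * s + (R0 * D * D) * M')%Z); [rewrite HM' in Hs; lia|]. apply dv_comb2; assumption. }
      apply (dv_eq g (1 * (a * N' + 1) + (- N') * a)%Z); [ring|]. apply dv_comb2; [|exact ga].
      rewrite Hb0. unfold V'. apply Z.divide_mul_r, Z.divide_mul_r. exact g2. }
    cbv beta. rewrite !INR_IZR_INZ, HnD, !Z2Nat.id by lia. rewrite HQdef, HNdef, HkK.
    rewrite (orbit_key N' V' a A 0 _ y Hy HV').
    + f_equal. unfold A, V'. apply rhs_eq; assumption.
    + exists b0. exact Hb0.
    + exists (s / M')%Z. unfold A, V'. assert (K1 := f_equal (Z.mul K) Hsd). lia.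
    + change (IZR (Z.of_nat j)) with (IZR J). rewrite Rplus_0_r.
      rewrite (xj_eq p J Q Nn K C M) by assumption. fold N.
      assert (IZR D <> 0) by (apply not_0_IZR; lia).
      assert (IZR M' <> 0) by (apply not_0_IZR; lia).
      unfold V'. rewrite HN', HM', !mult_IZR. field. repeat split; assumption.
  - intros [d [Hd [[x Hx] [t [Ht [Hg ->]]]]]].
    assert (HnD : (n / d = x)%nat) by (rewrite Hx; apply Nat.div_mul; lia).
    rewrite HnD in Ht, Hg |- *.
    set (D := Z.of_nat d). set (M' := Z.of_nat x). set (T := Z.of_nat t).
    assert (HM' : Nn = (M' * D)%Z) by (rewrite <- HNdef, Hx, Nat2Z.inj_mul; reflexivity).
    assert (HD : (0 < D)%Z) by lia.
    assert (HM'p : (0 < M')%Z) by nia.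
    pose proof (Z_gcd1 _ _ Hg) as HT. fold T M' in HT.
    set (A := (R0 * D * Nn + K * T)%Z).
    set (V' := (K * M')%Z).
    assert (HV' : (0 < V')%Z) by (unfold V'; lia).
    assert (HR0K : Z.gcd R0 K = 1%Z).
    { apply gcd1_of. intros g g1 g2.
      apply (dv_eq g (e * K + (- (p * M * Nn)) * R0)%Z); [lia|]. apply dv_comb2; assumption. }
    assert (HDK : Z.gcd D K = 1%Z).
    { apply gcd1_of. intros g g1 g2. apply (gcd1_div g Nn K HNK); [|exact g2].
      rewrite HM'. apply Z.divide_mul_r. exact g1. }
    assert (HKM' : Z.gcd K M' = 1%Z).
    { apply gcd1_of. intros g g1 g2. apply (gcd1_div g K Nn HKN); [exact g1|].
      rewrite HM'. apply Z.divide_mul_l. exact g2. }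
    assert (HAV : Z.gcd A V' = 1%Z).
    { apply cop_mul_r.
      - apply gcd1_of. intros g g1 g2.
        apply (gcd1_div g (R0 * D * Nn) K); [apply cop_mul; [apply cop_mul|]; assumption| |exact g2].
        apply (dv_eq g (1 * A + (- T) * K)%Z); [unfold A; ring|]. apply dv_comb2; assumption.
      - apply gcd1_of. intros g g1 g2.
        apply (gcd1_div g (K * T) M'); [apply cop_mul; [exact HKM'|exact HT]| |exact g2].
        apply (dv_eq g (1 * A + (- (R0 * D * D)) * M')%Z); [unfold A; rewrite HM'; ring|]. apply dv_comb2; assumption. }
    destruct (bezout_inv _ _ HAV) as [u0 [v Hv]].
    set (W := (D * u0 * e - p * M * (v * M' - T * u0))%Z).
    assert (HW : (D * u0 = p * M + K * W)%Z).
    { unfold W. unfold V', A in Hv.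
      assert (K1 := f_equal (Z.mul (D * u0)) He). assert (K2 := f_equal (Z.mul (p * M)) Hv). lia. }
    pose proof (Z.mod_pos_bound W Nn HN) as HWb.
    pose proof (Z.div_mod W Nn ltac:(lia)) as HWd.
    set (Dq := (W / Nn)%Z) in *.
    set (J := (W mod Nn)%Z) in *.
    exists (Z.to_nat J). split; [lia|].
    cbv beta. rewrite !INR_IZR_INZ, !Z2Nat.id by lia. rewrite HQdef, HNdef, HkK.
    rewrite (orbit_key u0 V' A A (- Dq) _ y Hy HV').
    + f_equal. unfold A, V'. symmetry. apply rhs_eq; assumption.
    + exists v. rewrite <- Hv. ring.
    + exists 0%Z. ring.
    + rewrite (xj_eq p J Q Nn K C M) by assumption.
      assert (E : (p * M + J * K = D * u0 - K * Nn * Dq)%Z).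
      { assert (K1 := f_equal (Z.mul K) HWd). lia. }
      rewrite E.
      assert (IZR D <> 0) by (apply not_0_IZR; lia).
      assert (IZR M' <> 0) by (apply not_0_IZR; lia).
      unfold V'. rewrite HM', opp_IZR, minus_IZR, !mult_IZR. field. repeat split; assumption.
Qed.

Theorem proposition3p7 (p : Z) (q n : nat) :
  (0 < q)%nat -> Z.gcd p (Z.of_nat q) = 1%Z ->
  (0 < n)%nat -> Nat.divide (Nat.gcd (n ^ 2) q) n ->
  (let k := (q / Nat.gcd n q)%nat in
   exists xd : nat -> R,
     forall y : R, 0 < y ->
       Mset_eq (Rn n (IZR p / INR q) y)
         (fun O => exists d : nat, (0 < d)%nat /\ Nat.divide d n /\
            Rpr (n / d) (xd d) (INR d ^ 2 / (INR k ^ 2 * INR n ^ 2 * y)) O))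
  /\
  (Nat.gcd n q = 1%nat ->
   forall a b : Z, (a * Z.of_nat n + b * Z.of_nat q = 1)%Z ->
   forall pnbar : Z, Z.divide (Z.of_nat q) (p * Z.of_nat n * pnbar - 1) ->
   forall y : R, 0 < y ->
     Mset_eq (Rpr n (IZR p / INR q) y)
             (Rpr n (- (IZR pnbar * IZR a) / INR q) (1 / (INR q ^ 2 * INR n ^ 2 * y)))).
Proof.
  intros Hq Hp Hn Hdiv. split.
  - apply part1; assumption.
  - intros Hc. apply part2; assumption.
Qed.
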